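(* Let $\Sigma$ be a two-letter alphabet, $\Gamma$ a finite alphabet, $h:\Sigma^*\to\Gamma^*$ an injective morphism and $w\in\Sigma^{\mathbb{N}}$ an infinite word. If there exist factors $f_1,f_2,f_3,\dots$ of $h(w)$ that are not synchronizing words of $h(\Sigma)$ and satisfy $\lim_{i\to\infty}|f_i| = \infty$, then $\mathrm{ACE}(h(w)) = \mathrm{ACE}(w) = \infty$.
   Context: For a finite set $X$ of finite words, a word $w$ is a synchronizing word of $X$ if $w = w_1w_2$ for some words $w_1,w_2$ such that for every $v\in X^*$ of the form $v = pws$, we have $pw_1\in X^*$ and $w_2s\in X^*$. $\mathrm{Fact}_n(w)$ is the set of length-$n$ factors of $w$. For a nonempty word $v$ and integer $p\ge0$, $v^{p/|v|}$ is the prefix of length $p$ of $vvv\cdots$. For a nonempty finite word $x$, $\mathrm{E}(x) = \sup\{ r \in \mathbb{Q} : x = v^r \text{ for some nonempty } v\}$. For an infinite word $w$, $\mathrm{ACE}(w) = \limsup_{n\to\infty}\sup\{\mathrm{E}(x) : x\in\mathrm{Fact}_n(w)\}$. *)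

(* Defs.v *)
From HB Require Import structures.
From mathcomp Require Import all_boot all_order all_algebra.
From mathcomp Require Import all_classical all_reals all_analysis.
From mathcomp Require Import Rstruct.
Set Implicit Arguments. Unset Strict Implicit. Unset Printing Implicit Defensive.
Import Order.TTheory GRing.Theory Num.Theory.
Local Open Scope classical_set_scope.
Local Open Scope ring_scope.

Notation Real := Rdefinitions.R.

(* The morphism h : Sigma^* -> Gamma^* with Sigma = bool (two letters),
   given by the images of the two letters. *)
Definition hmorph {G : Type} (hh : bool -> seq G) (u : seq bool) : seq G :=
  flatten (map hh u).

Definition pref {T : Type} (u : nat -> T) (n : nat) : seq T := mkseq u n.

Definition factor_of {T : eqType} (w : nat -> T) (x : seq T) : Prop :=
  exists m, infix x (pref w m).

(* Factors of the infinite word h(w): factors of the images of prefixes of w. *)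
Definition factor_of_image {G : eqType} (hh : bool -> seq G) (w : nat -> bool)
  (x : seq G) : Prop :=
  exists m, infix x (hmorph hh (pref w m)).

Definition in_star {G : eqType} (X : seq (seq G)) (v : seq G) : Prop :=
  exists ws : seq (seq G), (forall y, y \in ws -> y \in X) /\ flatten ws = v.

Definition synchronizing {G : eqType} (X : seq (seq G)) (w : seq G) : Prop :=
  exists w1 w2, w = w1 ++ w2 /\
    forall p s, in_star X (p ++ w ++ s) -> in_star X (p ++ w1) /\ in_star X (w2 ++ s).

(* v^{p/|v|}: the prefix of length p of vvv... *)
Definition fracpow {T : Type} (v : seq T) (p : nat) : seq T :=
  take p (flatten (nseq p v)).

Definition Exp {T : eqType} (x : seq T) : \bar Real :=
  ereal_sup [set e : \bar Real | exists (p : nat) (v : seq T),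
     [/\ (0 < size v)%N, x = fracpow v p & e = ((p%:R / (size v)%:R : Real)%:E)]].

Definition Fact_n {T : eqType} (F : seq T -> Prop) (n : nat) : set (seq T) :=
  [set x | F x /\ size x = n].

Definition ACE {T : eqType} (F : seq T -> Prop) : \bar Real :=
  limn_esup (fun n => ereal_sup [set Exp x | x in Fact_n F n]).

(* Main.v *)
Require Import Defs.
From HB Require Import structures.
From mathcomp Require Import all_boot all_order all_algebra.
From mathcomp Require Import all_classical all_reals all_analysis.
From mathcomp Require Import Rstruct zify.
Set Implicit Arguments. Unset Strict Implicit. Unset Printing Implicit Defensive.


Definition cutp (T : Type) (hh : bool -> seq T) (W : seq bool) k :=
  size (hmorph hh (take k W)).

Lemma hmorph_cat (T : Type) (hh : bool -> seq T) u v :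
  hmorph hh (u ++ v) = hmorph hh u ++ hmorph hh v.
Proof. by rewrite /hmorph map_cat flatten_cat. Qed.

Lemma hmorph_cons (T : Type) (hh : bool -> seq T) a u :
  hmorph hh (a :: u) = hh a ++ hmorph hh u.
Proof. by []. Qed.

Lemma take_hmorph (T : Type) (hh : bool -> seq T) W k :
  take (cutp hh W k) (hmorph hh W) = hmorph hh (take k W).
Proof. by rewrite /cutp -{2}(cat_take_drop k W) hmorph_cat take_size_cat. Qed.

Lemma drop_hmorph (T : Type) (hh : bool -> seq T) W k :
  drop (cutp hh W k) (hmorph hh W) = hmorph hh (drop k W).
Proof. by rewrite /cutp -{2}(cat_take_drop k W) hmorph_cat drop_size_cat. Qed.

Lemma hmorph_split (T : Type) (hh : bool -> seq T) W k :
  hmorph hh W = hmorph hh (take k W) ++ hmorph hh (drop k W).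
Proof. by rewrite -hmorph_cat cat_take_drop. Qed.

Lemma cutp_mono (T : Type) (hh : bool -> seq T) W k k' :
  k <= k' -> cutp hh W k <= cutp hh W k'.
Proof.
move=> le; rewrite /cutp -(take_takel W le) (hmorph_split _ (take k' W) k) size_cat.
exact: leq_addr.
Qed.

Definition Lh (T : Type) (hh : bool -> seq T) := size (hh false) + size (hh true).

Lemma size_hh_le (T : Type) (hh : bool -> seq T) b : size (hh b) <= Lh hh.
Proof. by case: b; rewrite /Lh; lia. Qed.

Lemma size_hmorph_le (T : Type) (hh : bool -> seq T) U :
  size (hmorph hh U) <= size U * Lh hh.
Proof.
elim: U => [|a U IH] //=; rewrite hmorph_cons size_cat mulSn.
by apply: leq_add => //; apply: size_hh_le.
Qed.

Lemma cutpS (T : Type) (hh : bool -> seq T) W k :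
  cutp hh W k.+1 <= cutp hh W k + Lh hh.
Proof.
rewrite /cutp; case: (ltnP k (size W)) => Hk.
  rewrite (take_nth false Hk) -cats1 hmorph_cat size_cat leq_add2l.
  rewrite /hmorph /= cats0; exact: size_hh_le.
by rewrite !take_oversize //; [lia | lia].
Qed.

Lemma cutp0 (T : Type) (hh : bool -> seq T) W : cutp hh W 0 = 0.
Proof. by rewrite /cutp take0. Qed.

Lemma cutp_over (T : Type) (hh : bool -> seq T) W k :
  size W <= k -> cutp hh W k = size (hmorph hh W).
Proof. by move=> H; rewrite /cutp take_oversize. Qed.

Lemma size_hmorph_eq (T T' : Type) (hh : bool -> seq T) (hh' : bool -> seq T') U :
  (forall b, size (hh' b) = size (hh b)) ->
  size (hmorph hh' U) = size (hmorph hh U).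
Proof.
move=> E; elim: U => [|a U IH] //=.
by rewrite !hmorph_cons !size_cat IH E.
Qed.

Lemma catsK (T : Type) (s a b : seq T) : s ++ a = s ++ b -> a = b.
Proof. by elim: s => //= x s IH [] /IH. Qed.

Lemma ex_min (P : pred nat) n : P n -> exists m, P m /\ forall k, P k -> m <= k.
Proof.
move=> Pn; have ex : exists n, P n by exists n.
by case: (ex_minnP ex) => m Pm Hm; exists m.
Qed.

Lemma ex_max (P : pred nat) n b : P n -> (forall k, P k -> k <= b) ->
  exists m, P m /\ forall k, P k -> k <= m.
Proof.
move=> Pn ub; have ex : exists n, P n by exists n.
by case: (ex_maxnP ex ub) => m Pm Hm; exists m.
Qed.


Lemma take_catr (T : Type) (s1 s2 : seq T) n : take (size s1 + n) (s1 ++ s2) = s1 ++ take n s2.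
Proof. by rewrite take_cat ltnNge leq_addr /= addKn. Qed.

Lemma cutpD (T : Type) (h : bool -> seq T) W k k' :
  cutp h W (k + k') = cutp h W k + cutp h (drop k W) k'.
Proof. by rewrite /cutp takeD hmorph_cat size_cat. Qed.

Lemma cutp_cons (T : Type) (h : bool -> seq T) a U i :
  cutp h (a :: U) i.+1 = size (h a) + cutp h U i.
Proof. by rewrite /cutp /= hmorph_cons size_cat. Qed.

Definition DJ (T : eqType) (h : bool -> seq T) (r : seq T) (U : seq bool) : Prop :=
  r != [::] /\ exists V e, r ++ hmorph h V = hmorph h U ++ e /\
    forall i j, cutp h U i != size r + cutp h V j.

Definition Step (T : eqType) (h : bool -> seq T) r a r' : Prop :=
  (size (h a) < size r /\ r = h a ++ r') \/
  (exists P c m, 0 < m < size (h c) /\ h a = r ++ hmorph h P ++ take m (h c)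
     /\ r' = drop m (h c)).

Lemma step_ex (T : eqType) (h : bool -> seq T) r a U :
  (forall b, h b != [::]) -> DJ h r (a :: U) -> exists r', Step h r a r' /\ DJ h r' U.
Proof.
move=> hne [rne [V [e [E D]]]].
have Es : hmorph h (a :: U) ++ e = h a ++ (hmorph h U ++ e) by rewrite hmorph_cons catA.
case: (ltngtP (size (h a)) (size r)) => Hs.
- have Er : r = h a ++ drop (size (h a)) r.
    have : take (size (h a)) (r ++ hmorph h V) = take (size (h a)) (h a ++ (hmorph h U ++ e)).
      by rewrite E Es.
    rewrite [take _ (h a ++ _)]take_size_cat // takel_cat; last by lia.
    by move=> {1}<-; rewrite cat_take_drop.
  exists (drop (size (h a)) r); split; first by left.
  split; first by rewrite -size_eq0 size_drop; lia.
  exists V, e; split.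
    apply: (@catsK _ (h a)); rewrite catA -Er E Es //.
  move=> i j; have := D i.+1 j; rewrite cutp_cons size_drop.
  by apply: contra => /eqP H; apply/eqP; lia.
- have Hsz : size (h a) <= size r + size (hmorph h V).
    have := congr1 size E; rewrite Es !size_cat; lia.
  have [j [Pj Hj]] : exists j, ((j <= size V) && (size r + cutp h V j < size (h a))) /\
      forall k, ((k <= size V) && (size r + cutp h V k < size (h a))) -> k <= j.
    apply: (@ex_max _ 0 (size V)); first by rewrite cutp0 addn0 leq0n Hs.
    by move=> k /andP[].
  move: Pj => /andP [jV jlt].
  have jV' : j < size V.
    rewrite ltn_neqAle jV andbT; apply/eqP => Ej; move: jlt; rewrite Ej cutp_over //; lia.
  have nj : size (h a) <= size r + cutp h V j.+1.
    rewrite leqNgt; apply/negP => H; have := Hj j.+1; rewrite jV' H => /(_ isT); lia.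
  have ne : size (h a) != size r + cutp h V j.+1.
    by have := D 1 j.+1; rewrite cutp_cons cutp0 addn0.
  set c := nth false V j.
  have cutj1 : cutp h V j.+1 = cutp h V j + size (h c).
    by rewrite /cutp (take_nth false jV') -cats1 hmorph_cat size_cat /hmorph /= cats0.
  have decV : hmorph h V = hmorph h (take j V) ++ h c ++ hmorph h (drop j.+1 V).
    by rewrite (hmorph_split _ V j) (drop_nth false jV') hmorph_cons.
  set m := size (h a) - size r - cutp h V j.
  have Hm : 0 < m < size (h c) by rewrite /m; lia.
  have Eha : h a = r ++ hmorph h (take j V) ++ take m (h c).
    have : take (size (h a)) (r ++ hmorph h V) = take (size (h a)) (h a ++ (hmorph h U ++ e)).
      by rewrite E Es.
    rewrite [take _ (h a ++ _)]take_size_cat // => <-.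
    have -> : size (h a) = size r + (size (hmorph h (take j V)) + m).
      by rewrite /m /cutp in Hm *; lia.
    rewrite decV take_catr take_catr takel_cat //; lia.
  exists (drop m (h c)); split.
    by right; exists (take j V), c, m.
  split; first by rewrite -size_eq0 size_drop; lia.
  exists (drop j.+1 V), e; split.
    apply: (@catsK _ (h a)); rewrite -Es -E decV {1}Eha -!catA.
    by rewrite [take m (h c) ++ _]catA cat_take_drop.
  move=> i j'; have := D i.+1 (j.+1 + j'); rewrite cutp_cons cutpD size_drop.
  by apply: contra => /eqP H; apply/eqP; rewrite /m in Hm H; lia.
- by have := D 1 0; rewrite cutp_cons !cutp0 !addn0 Hs eqxx.
Qed.

Lemma hd0 (T : eqType) (d : T) (s1 s2 : seq T) : s1 != [::] -> nth d (s1 ++ s2) 0 = nth d s1 0.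
Proof. by case: s1. Qed.

Lemma size_take_lt (T : Type) m (s : seq T) : 0 < m < size s -> size (take m s) = m.
Proof. by move=> /andP[_ H]; rewrite size_takel // ltnW. Qed.

Lemma uniq_dec (T : eqType) (h : bool -> seq T) d :
  (forall b, h b != [::]) -> (forall a b, nth d (h a) 0 = nth d (h b) 0 -> a = b) ->
  forall P1 P2 c1 c2 m1 m2, 0 < m1 < size (h c1) -> 0 < m2 < size (h c2) ->
  hmorph h P1 ++ take m1 (h c1) = hmorph h P2 ++ take m2 (h c2) -> c1 = c2 /\ m1 = m2.
Proof.
move=> hne hhead; elim=> [|a P1 IH] [|b P2] c1 c2 m1 m2 H1 H2 /=.
- move=> E; have := congr1 (nth d ^~ 0) E; rewrite !nth_take; try lia.
  move=> /hhead Ec; split=> //; subst c2.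
  by have := congr1 size E; rewrite (size_take_lt H1) (size_take_lt H2); lia.
- rewrite hmorph_cons => E; have := congr1 (nth d ^~ 0) E; rewrite nth_take; last lia.
  rewrite -catA hd0 // => /hhead Ec; subst b.
  by have := congr1 size E; rewrite !size_cat (size_take_lt H1) (size_take_lt H2); lia.
- rewrite hmorph_cons => E; have := congr1 (nth d ^~ 0) E; rewrite [in X in _ = X]nth_take; last lia.
  rewrite -catA hd0 // => /hhead Ec; subst a.
  by have := congr1 size E; rewrite !size_cat (size_take_lt H1) (size_take_lt H2); lia.
- rewrite !hmorph_cons -!catA => E.
  have := congr1 (nth d ^~ 0) E; rewrite !hd0 // => /hhead Eab; subst b.
  exact: (IH P2 _ _ _ _ H1 H2 (catsK E)).
Qed.

Lemma step_det (T : eqType) (h : bool -> seq T) d r a r1 r2 :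
  (forall b, h b != [::]) -> (forall a b, nth d (h a) 0 = nth d (h b) 0 -> a = b) ->
  Step h r a r1 -> Step h r a r2 -> r1 = r2.
Proof.
move=> hne hhead [[S1 E1]|[P1 [c1 [m1 [H1 [E1 R1]]]]]] [[S2 E2]|[P2 [c2 [m2 [H2 [E2 R2]]]]]].
- by apply: (@catsK _ (h a)); rewrite -E1 -E2.
- by move: S1; rewrite E2 !size_cat (size_take_lt H2); lia.
- by move: S2; rewrite E1 !size_cat (size_take_lt H1); lia.
- rewrite E1 in E2; have [Ec Em] := uniq_dec hne hhead H1 H2 (catsK E2).
  by rewrite R1 R2 Ec Em.
Qed.

Lemma first_letter (T : eqType) (h : bool -> seq T) d r a b U1 U2 :
  (forall b, h b != [::]) -> (forall a b, nth d (h a) 0 = nth d (h b) 0 -> a = b) ->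
  DJ h r (a :: U1) -> DJ h r (b :: U2) -> a = b.
Proof.
move=> hne hhead [rne [V1 [e1 [E1 _]]]] [_ [V2 [e2 [E2 _]]]].
apply: hhead.
have := congr1 (nth d ^~ 0) E1; have := congr1 (nth d ^~ 0) E2.
rewrite !hmorph_cons -!catA !hd0 // => <- <- //.
Qed.

Lemma key (T : eqType) (h : bool -> seq T) d :
  (forall b, h b != [::]) -> (forall a b, nth d (h a) 0 = nth d (h b) 0 -> a = b) ->
  forall n r U1 U2, DJ h r U1 -> DJ h r U2 -> n < size U1 -> n < size U2 ->
  nth false U1 n = nth false U2 n.
Proof.
move=> hne hhead; elim=> [|n IH] r [|a U1] [|b U2] //= D1 D2 H1 H2.
  exact: (first_letter hne hhead D1 D2).
have Eab := first_letter hne hhead D1 D2; subst b.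
have [r1 [S1 D1']] := step_ex hne D1.
have [r2 [S2 D2']] := step_ex hne D2.
have E := step_det hne hhead S1 S2; subst r2.
exact: (IH r1 U1 U2 D1' D2').
Qed.


Definition Sset (T : eqType) (h : bool -> seq T) :=
  [seq drop i (h false) | i <- iota 0 (size (h false))] ++
  [seq drop i (h true) | i <- iota 0 (size (h true))].

Lemma inSset (T : eqType) (h : bool -> seq T) c i : i < size (h c) -> drop i (h c) \in Sset h.
Proof.
move=> Hi; rewrite mem_cat; apply/orP; case: c Hi => Hi; [right|left];
  by apply/mapP; exists i; rewrite // mem_iota.
Qed.

Lemma Sset_inv (T : eqType) (h : bool -> seq T) r : r \in Sset h ->
  exists c i, i < size (h c) /\ r = drop i (h c).
Proof.
rewrite mem_cat => /orP [] /mapP [i]; rewrite mem_iota => /andP [_ Hi] ->.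
  by exists false, i.
by exists true, i.
Qed.

Lemma size_Sset (T : eqType) (h : bool -> seq T) : size (Sset h) = Lh h.
Proof. by rewrite /Sset size_cat !size_map !size_iota. Qed.

Lemma step_Sset (T : eqType) (h : bool -> seq T) r a r' :
  Step h r a r' -> r \in Sset h -> r' \in Sset h.
Proof.
move=> [[S E]|[P [c [m [H [E R]]]]]] rS.
  have [c [i [Hi Er]]] := Sset_inv rS.
  have -> : r' = drop (size (h a) + i) (h c).
    by rewrite -drop_drop -Er E drop_size_cat.
  apply: inSset; move: S; rewrite Er size_drop; lia.
by rewrite R; apply: inSset; lia.
Qed.

Lemma iter_DJ (T : eqType) (h : bool -> seq T) r U :
  (forall b, h b != [::]) -> DJ h r U -> r \in Sset h ->
  forall k, k <= size U -> exists r', r' \in Sset h /\ DJ h r' (drop k U).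
Proof.
move=> hne D rS; elim=> [|k IH] Hk; first by exists r; rewrite drop0.
have [r1 [r1S D1]] := IH (ltnW Hk).
move: D1; rewrite (drop_nth false Hk) => D1.
have [r2 [S2 D2]] := step_ex hne D1.
by exists r2; split => //; apply: step_Sset S2 r1S.
Qed.

Lemma pigeon_DJ (T : eqType) (h : bool -> seq T) d r U :
  (forall b, h b != [::]) -> (forall a b, nth d (h a) 0 = nth d (h b) 0 -> a = b) ->
  DJ h r U -> r \in Sset h -> Lh h <= size U ->
  exists i j, i < j <= Lh h /\
    forall t, j + t < size U -> nth false U (i + t) = nth false U (j + t).
Proof.
move=> hne hhead D rS HU.
have ex : forall k, exists r', (k <= size U -> r' \in Sset h /\ DJ h r' (drop k U)).
  move=> k; case: (leqP k (size U)) => Hk.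
    by have [r' [H1 H2]] := iter_DJ hne D rS Hk; exists r'.
  by exists [::] => H; exfalso; lia.
have [st Hst] := choice ex.
set l := [seq st k | k <- iota 0 (Lh h).+1].
have nu : ~~ uniq l.
  apply/negP => ul.
  have := uniq_leq_size ul (s2 := Sset h).
  rewrite size_Sset /l size_map size_iota ltnn => H; apply/negP: isT; apply: H.
  move=> x /mapP [k]; rewrite mem_iota => /andP [_ Hk] ->.
  by have [] := Hst k; first lia.
have [i [j [ij jl E]]] := uniqPn [::] nu.
move: jl E; rewrite /l size_map size_iota => jl.
rewrite !(nth_map 0) ?size_iota //; try lia.
rewrite !nth_iota //; try lia.
rewrite !add0n => E.
exists i, j; split; first by lia.
move=> t Ht.
have [Si Di] := Hst i (ltac:(lia)).
have [Sj Dj] := Hst j (ltac:(lia)).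
rewrite E in Di.
rewrite -!nth_drop.
apply: (key hne hhead Di Dj); rewrite size_drop; lia.
Qed.

Lemma pow_periodic (U : seq bool) q : 0 < q ->
  (forall t, q + t < size U -> nth false U t = nth false U (q + t)) ->
  forall K, K * q <= size U -> flatten (nseq K (take q U)) = take (K * q) U.
Proof.
move=> q0 P K; elim: K U P => [|K IH] U P HK; first by rewrite take0.
rewrite mulSn takeD /= -IH.
- case: K {IH} HK => [|K] HK; first by [].
  suff -> : take q (drop q U) = take q U by [].
  apply: (@eq_from_nth _ false); rewrite !size_take size_drop; first by case: ifP; case: ifP; lia.
  move=> t Ht; rewrite nth_take; last by move: Ht; case: ifP; lia.
  rewrite nth_take; last by move: Ht; case: ifP; lia.
  rewrite nth_drop -P //; move: Ht HK; case: ifP; rewrite ?mulSn; lia.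
- move=> t Ht; rewrite !nth_drop; move: Ht; rewrite size_drop => Ht.
  apply: P; lia.
- rewrite size_drop; lia.
Qed.

Lemma power_of_DJ (T : eqType) (h : bool -> seq T) d r U K :
  (forall b, h b != [::]) -> (forall a b, nth d (h a) 0 = nth d (h b) 0 -> a = b) ->
  DJ h r U -> r \in Sset h -> K.+1 * Lh h <= size U ->
  exists v : seq bool, v != [::] /\ infix (flatten (nseq K v)) U.
Proof.
move=> hne hhead D rS HU.
have HL : Lh h <= size U by move: HU; rewrite mulSn; lia.
have [i [j [ij P]]] := pigeon_DJ hne hhead D rS HL.
set q := j - i.
set U2 := drop i U.
have P2 : forall t, q + t < size U2 -> nth false U2 t = nth false U2 (q + t).
  move=> t; rewrite /U2 size_drop !nth_drop => Ht.
  have -> : i + (q + t) = j + t by rewrite /q; lia.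
  apply: P; lia.
have Hq : 0 < q by rewrite /q; lia.
have HK : K * q <= size U2.
  rewrite /U2 size_drop; have : K * q <= K * Lh h by rewrite leq_mul2l; lia.
  move: HU; rewrite mulSn; lia.
exists (take q U2); split.
  have sU : i < size U by lia.
  rewrite -size_eq0 size_take /U2 size_drop; case: ifP => _; first by rewrite -lt0n.
  by rewrite subn_eq0 -ltnNge.
rewrite (pow_periodic Hq P2 HK).
apply: (infix_trans (infix_take _ _)); exact: infix_drop.
Qed.


Lemma cutp_nth (T : Type) (h : bool -> seq T) V l : l < size V ->
  cutp h V l.+1 = cutp h V l + size (h (nth false V l)).
Proof. by move=> Hl; rewrite /cutp (take_nth false Hl) -cats1 hmorph_cat size_cat /hmorph /= cats0. Qed.

Lemma hmorph_nth (T : Type) (h : bool -> seq T) V l : l < size V ->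
  hmorph h V = hmorph h (take l V) ++ h (nth false V l) ++ hmorph h (drop l.+1 V).
Proof. by move=> Hl; rewrite (hmorph_split _ V l) (drop_nth false Hl) hmorph_cons. Qed.

Lemma drop_catr (T : Type) (s1 s2 : seq T) n : drop (size s1 + n) (s1 ++ s2) = drop n s2.
Proof. by rewrite drop_cat ltnNge leq_addr /= addKn. Qed.

Lemma drop_cat_le (T : Type) (s1 s2 : seq T) n : n <= size s1 ->
  drop n (s1 ++ s2) = drop n s1 ++ s2.
Proof.
move=> H; rewrite drop_cat; case: ltnP => // H'.
have -> : n = size s1 by apply/eqP; rewrite eqn_leq H H'.
by rewrite subnn drop0 drop_size.
Qed.

Lemma Lh_pos (T : eqType) (h : bool -> seq T) : (forall b, h b != [::]) -> 0 < Lh h.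
Proof. by move=> hne; have := hne false; rewrite /Lh -size_eq0; lia. Qed.

Lemma core' (T : eqType) (h : bool -> seq T) d W V A B P S z K :
  (forall b, h b != [::]) -> (forall a b, nth d (h a) 0 = nth d (h b) 0 -> a = b) ->
  hmorph h W = A ++ z ++ B -> hmorph h V = P ++ z ++ S ->
  (forall k l a, a <= size z -> cutp h W k = size A + a -> cutp h V l = size P + a -> False) ->
  K.+1 * Lh h * Lh h + 2 * Lh h <= size z ->
  exists v : seq bool, v != [::] /\ infix (flatten (nseq K v)) W.
Proof.
move=> hne hhead EW EV Dis Hz.
have L0 := Lh_pos hne.
set L := Lh h in L0 Hz *.
have HLz : L <= size z.
  have : L <= K.+1 * L * L by nia.
  lia.
have cW : cutp h W (size W) = size A + size z + size B.
  by rewrite cutp_over // EW !size_cat addnA.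
have cV : cutp h V (size V) = size P + size z + size S.
  by rewrite cutp_over // EV !size_cat addnA.
have [k0 [A0 Mk0]] : exists k0, size A <= cutp h W k0 /\ forall k, size A <= cutp h W k -> k0 <= k.
  by apply: (@ex_min (fun k => size A <= cutp h W k) (size W)); rewrite cW; lia.
have k0W : k0 <= size W by apply: Mk0; rewrite cW; lia.
have k0up : cutp h W k0 < size A + L.
  case: k0 A0 Mk0 k0W => [|k] A0 Mk0 k0W; first by rewrite cutp0; lia.
  have : cutp h W k < size A.
    rewrite ltnNge; apply/negP => /Mk0; lia.
  have := cutpS h W k; rewrite -/L; lia.
have [k1 [/andP [k1W k1z] Mk1]] : exists k1, ((k1 <= size W) && (cutp h W k1 <= size A + size z))
    /\ forall k, ((k <= size W) && (cutp h W k <= size A + size z)) -> k <= k1.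
  apply: (@ex_max _ k0 (size W)); last by move=> k /andP[].
  by rewrite k0W /=; lia.
have k01 : k0 <= k1 by apply: Mk1; rewrite k0W /=; lia.
have k1low : size A + size z < cutp h W k1 + L.
  case: (ltnP k1 (size W)) => Hk1.
    have : ~~ ((k1.+1 <= size W) && (cutp h W k1.+1 <= size A + size z)).
      by apply/negP => /Mk1; lia.
    rewrite Hk1 /= -ltnNge; have := cutpS h W k1; rewrite -/L; lia.
  have -> : k1 = size W by lia.
  rewrite cW; lia.
set a0 := cutp h W k0 - size A.
have a0z : a0 <= size z by have := cutp_mono h W k01; rewrite /a0; lia.
set U := take (k1 - k0) (drop k0 W).
have sU : size U = k1 - k0 by rewrite /U size_take size_drop; case: ifP; lia.
have cU : cutp h W k1 = cutp h W k0 + size (hmorph h U).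
  by have := cutpD h W k0 (k1 - k0); rewrite subnKC.
have P0 : 0 < size P + a0.
  rewrite lt0n; apply/negP => /eqP H0.
  apply: (Dis k0 0 0) => //; rewrite ?cutp0; lia.
have [l0 [/andP [l0V l0lt] Ml0]] : exists l0, ((l0 <= size V) && (cutp h V l0 < size P + a0))
    /\ forall l, ((l <= size V) && (cutp h V l < size P + a0)) -> l <= l0.
  apply: (@ex_max _ 0 (size V)); last by move=> k /andP[].
  by rewrite cutp0 P0.
have l0V' : l0 < size V.
  rewrite ltn_neqAle l0V andbT; apply/eqP => E; move: l0lt; rewrite E cV; lia.
have l0up : size P + a0 < cutp h V l0.+1.
  have : ~~ ((l0.+1 <= size V) && (cutp h V l0.+1 < size P + a0)).
    by apply/negP => /Ml0; lia.
  rewrite l0V' /= -leqNgt leq_eqVlt => /orP [/eqP E|] //.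
  exfalso; apply: (Dis k0 l0.+1 a0) => //; rewrite ?E /a0; lia.
set c := nth false V l0.
have cV1 : cutp h V l0.+1 = cutp h V l0 + size (h c) by apply: cutp_nth.
set o := size P + a0 - cutp h V l0.
have Ho : 0 < o < size (h c) by rewrite /o; lia.
set r0 := drop o (h c).
have r0S : r0 \in Sset h by apply: inSset; lia.
have sr0 : size r0 = size (h c) - o by rewrite /r0 size_drop.
have DJ0 : DJ h r0 U.
  split; first by rewrite -size_eq0 sr0; lia.
  set hU := hmorph h U.
  have hUz : size hU <= size z - a0 by rewrite /hU; lia.
  have E1 : r0 ++ hmorph h (drop l0.+1 V) = drop a0 z ++ S.
    have : drop (size P + a0) (hmorph h V) = drop a0 z ++ S.
      by rewrite EV drop_catr drop_cat_le.
    rewrite (hmorph_nth h l0V') -/c.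
    have -> : size P + a0 = size (hmorph h (take l0 V)) + o by rewrite /o /cutp in l0lt *; lia.
    by rewrite drop_catr drop_cat_le; last by rewrite ltnW //; case/andP: Ho.
  have E2 : drop a0 z = hU ++ drop (size hU) (drop a0 z).
    have : hmorph h (drop k0 W) = drop a0 z ++ B.
      rewrite -drop_hmorph EW.
      have -> : cutp h W k0 = size A + a0 by rewrite /a0; lia.
      by rewrite drop_catr drop_cat_le.
    rewrite (hmorph_split _ (drop k0 W) (k1 - k0)) -/U -/hU => E3.
    have : take (size hU) (hU ++ hmorph h (drop (k1 - k0) (drop k0 W))) =
           take (size hU) (drop a0 z ++ B) by rewrite E3.
    rewrite take_size_cat // takel_cat; last by rewrite size_drop.
    by move=> {1}->; rewrite cat_take_drop.
  exists (drop l0.+1 V), (drop (size hU) (drop a0 z) ++ S); split.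
    by rewrite E1 {1}E2 catA.
  move=> i j; apply/negP => /eqP Eij.
  set i' := minn i (k1 - k0).
  have ci : cutp h U i = cutp h (drop k0 W) i'.
    by rewrite /cutp /U -take_min.
  have ci2 : cutp h W (k0 + i') = cutp h W k0 + cutp h U i by rewrite cutpD ci.
  have ci3 : cutp h W (k0 + i') <= cutp h W k1 by apply: cutp_mono; rewrite /i'; lia.
  have cj : cutp h V (l0.+1 + j) = cutp h V l0.+1 + cutp h (drop l0.+1 V) j by rewrite cutpD.
  apply: (Dis (k0 + i') (l0.+1 + j) (cutp h W (k0 + i') - size A)); lia.
have HU : K.+1 * L <= size U.
  have H1 : K.+1 * L * L < size (hmorph h U) + 1 by lia.
  have H2 := size_hmorph_le h U; rewrite -/L in H2.
  have : K.+1 * L * L <= size U * L by lia.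
  by rewrite leq_pmul2r.
have [v [vne vinf]] := power_of_DJ hne hhead DJ0 r0S HU.
exists v; split => //.
apply: (infix_trans vinf); apply: (infix_trans (infix_take _ _)); exact: infix_drop.
Qed.


Lemma conj_half (T : eqType) (d : T) (x y : seq T) m :
  (forall i, i < m -> nth d (x ++ y) i = nth d (y ++ x) i) -> m < size x + size y -> 0 < size x ->
  take m (x ++ take m (x ++ y)) = take m (x ++ y) /\
  nth d (x ++ take m (x ++ y)) m = nth d (x ++ y) m.
Proof.
move=> Hi Hm Hx.
have ng : forall i, i < m -> nth d (take m (x ++ y)) i = nth d (x ++ y) i.
  by move=> i Hi'; rewrite nth_take.
have sg : size (take m (x ++ y)) = m by rewrite size_takel // size_cat ltnW.
have sxg : size (take m (x ++ take m (x ++ y))) = m by rewrite size_takel // size_cat sg leq_addl.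
split.
  apply: (@eq_from_nth _ d); first by rewrite sxg sg.
  move=> i; rewrite sxg => im.
  rewrite nth_take // nth_take // nth_cat.
  case: ltnP => Hix; first by rewrite nth_cat Hix.
  rewrite ng; last by lia.
  rewrite Hi; last by lia.
  have -> : nth d (x ++ y) i = nth d y (i - size x) by rewrite nth_cat ltnNge Hix.
  by rewrite nth_cat; have -> : i - size x < size y by lia.
rewrite nth_cat; case: ltnP => Hmx; first by rewrite nth_cat Hmx.
rewrite ng; last by lia.
rewrite Hi; last by lia.
have -> : nth d (x ++ y) m = nth d y (m - size x) by rewrite nth_cat ltnNge Hmx.
by rewrite nth_cat; have -> : m - size x < size y by lia.
Qed.

Lemma conj_exists (T : eqType) (h : bool -> seq T) :
  (forall b, h b != [::]) -> h false ++ h true != h true ++ h false ->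
  exists g h' d, (forall b, h b ++ g = g ++ h' b) /\ (forall b, size (h' b) = size (h b)) /\
    (forall a b, nth d (h' a) 0 = nth d (h' b) 0 -> a = b) /\ size g < Lh h.
Proof.
move=> hne neq.
set x := h false; set y := h true.
have [d xd] : exists d, x = d :: behead x.
  by move: (hne false); rewrite -/x; case: x => // a l _; exists a.
have sxy : size (x ++ y) = size (y ++ x) by rewrite !size_cat addnC.
have [m [Pm Mm]] : exists m, (nth d (x ++ y) m != nth d (y ++ x) m) /\
   forall k, nth d (x ++ y) k != nth d (y ++ x) k -> m <= k.
  have : exists i, nth d (x ++ y) i != nth d (y ++ x) i.
    case: (pselect (exists i, nth d (x ++ y) i != nth d (y ++ x) i)) => // H.
    exfalso; move/negP: neq; apply; apply/eqP.
    apply: (eq_from_nth (x0 := d) sxy) => i _; apply/eqP; apply/negPn/negP => Hn.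
    by apply: H; exists i.
  by case=> i Hi; apply: (@ex_min (fun k => nth d (x ++ y) k != nth d (y ++ x) k) i).
have Hlt : forall i, i < m -> nth d (x ++ y) i = nth d (y ++ x) i.
  by move=> i Hi; apply/eqP; rewrite -[_ == _]negbK; apply/negP => /Mm; lia.
have Hm : m < size x + size y.
  rewrite ltnNge; apply/negP => H; move: Pm; rewrite !nth_default ?eqxx //;
  rewrite size_cat; lia.
have px : 0 < size x by rewrite lt0n size_eq0; apply: hne.
have py : 0 < size y by rewrite lt0n size_eq0; apply: hne.
set g := take m (x ++ y).
have gyx : g = take m (y ++ x).
  apply: (@eq_from_nth _ d); first by rewrite !size_take sxy.
  move=> i; rewrite size_take => Hi; rewrite !nth_take; try by move: Hi; case: ifP; lia.
  by apply: Hlt; move: Hi; case: ifP; lia.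
have [Hx1 Hx2] := conj_half Hlt Hm px.
have [Hy1 Hy2] := @conj_half _ d y x m (fun i Hi => esym (Hlt i Hi)) ltac:(lia) py.
rewrite -/g -gyx in Hx1 Hx2 Hy1 Hy2.
set x' := drop m (x ++ g).
set y' := drop m (y ++ g).
exists g, (fun b => if b then y' else x'), d.
have sg : size g = m by rewrite size_take size_cat; case: ifP; lia.
split.
  by case; rewrite -/x -/y ?/y' ?/x' -{1}(cat_take_drop m (_ ++ g)) ?Hx1 ?Hy1.
split.
  by case; rewrite size_drop size_cat sg -/x -/y; lia.
split; last by rewrite sg /Lh -/x -/y.
have hx : nth d x' 0 = nth d (x ++ y) m by rewrite /x' nth_drop addn0.
have hy : nth d y' 0 = nth d (y ++ x) m by rewrite /y' nth_drop addn0.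
by case; case => //=; rewrite hx hy => E; move: Pm; rewrite E eqxx.
Qed.

Lemma hmorph_conj (T : Type) (h h' : bool -> seq T) g :
  (forall b, h b ++ g = g ++ h' b) -> forall W, hmorph h W ++ g = g ++ hmorph h' W.
Proof.
move=> E; elim=> [|a W IH]; first by rewrite /hmorph /= cats0.
by rewrite !hmorph_cons -catA IH catA E catA.
Qed.

Lemma inj_ne (T : eqType) (h : bool -> seq T) :
  injective (hmorph h) -> (forall b, h b != [::]) /\ h false ++ h true != h true ++ h false.
Proof.
move=> inj; split.
  move=> b; apply/eqP => E.
  have : hmorph h [:: b] = hmorph h [::] by rewrite /hmorph /= E.
  by move/inj.
apply/eqP => E.
have : hmorph h [:: false; true] = hmorph h [:: true; false] by rewrite /hmorph /= !cats0.
by move/inj.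
Qed.

Lemma core (T : eqType) (h : bool -> seq T) W V A B P S z K :
  injective (hmorph h) ->
  hmorph h W = A ++ z ++ B -> hmorph h V = P ++ z ++ S ->
  (forall k l a, a <= size z -> cutp h W k = size A + a -> cutp h V l = size P + a -> False) ->
  K.+1 * Lh h * Lh h + 3 * Lh h <= size z ->
  exists v : seq bool, v != [::] /\ infix (flatten (nseq K v)) W.
Proof.
move=> inj EW EV Dis Hz.
have [hne neq] := inj_ne inj.
have [g [h' [d [Eg [Sz [Hd Hg]]]]]] := conj_exists hne neq.
have hne' : forall b, h' b != [::].
  by move=> b; rewrite -size_eq0 Sz size_eq0.
have LL : Lh h' = Lh h by rewrite /Lh !Sz.
have Ehm := hmorph_conj Eg.
have gz : size g <= size z by lia.
have conv : forall (U : seq bool) A0 B0, hmorph h U = A0 ++ z ++ B0 ->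
    hmorph h' U = drop (size g) (A0 ++ take (size g) z) ++ drop (size g) z ++ (B0 ++ g).
  move=> U A0 B0 E.
  have : drop (size g) (hmorph h U ++ g) = hmorph h' U by rewrite Ehm drop_size_cat.
  move=> <-; rewrite E -{1}(cat_take_drop (size g) z) -!catA.
  rewrite catA drop_cat_le //; last by rewrite size_cat size_take; case: ifP; lia.
have EW' := conv W A B EW.
have EV' := conv V P S EV.
have szA : size (drop (size g) (A ++ take (size g) z)) = size A.
  by rewrite size_drop size_cat size_takel //; lia.
have szP : size (drop (size g) (P ++ take (size g) z)) = size P.
  by rewrite size_drop size_cat size_takel //; lia.
have cc : forall U k, cutp h' U k = cutp h U k.
  by move=> U k; rewrite /cutp (size_hmorph_eq _ Sz).
apply: (core' hne' Hd EW' EV').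
  move=> k l a Ha; rewrite szA szP !cc; apply: Dis.
  by move: Ha; rewrite size_drop; lia.
rewrite LL size_drop; lia.
Qed.


Lemma in_star_hmorph (T : eqType) (h : bool -> seq T) U :
  in_star [:: h false; h true] (hmorph h U).
Proof.
exists (map h U); split => //.
by move=> w /mapP [b _ ->]; case: b; rewrite !inE eqxx ?orbT.
Qed.

Lemma in_star_inv (T : eqType) (h : bool -> seq T) v :
  in_star [:: h false; h true] v -> exists U, hmorph h U = v.
Proof.
case=> ws [Hws <-]; exists (map (fun w => w == h true) ws).
rewrite /hmorph -map_comp; congr flatten; apply: map_id_in => w /Hws.
rewrite !inE /= => /orP [/eqP ->|/eqP ->]; last by rewrite eqxx.
by case: eqP => // <-.
Qed.

Lemma hmorph_take_eq (T : Type) (h : bool -> seq T) W A f B k a :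
  hmorph h W = A ++ f ++ B -> cutp h W k = size A + a -> a <= size f ->
  hmorph h (take k W) = A ++ take a f.
Proof.
move=> E C Ha; rewrite -take_hmorph C E take_catr takel_cat //.
Qed.

Lemma hmorph_drop_eq (T : Type) (h : bool -> seq T) W A f B k a :
  hmorph h W = A ++ f ++ B -> cutp h W k = size A + a -> a <= size f ->
  hmorph h (drop k W) = drop a f ++ B.
Proof.
move=> E C Ha; rewrite -drop_hmorph C E drop_catr drop_cat_le //.
Qed.

Lemma hmorph_mid (T : Type) (h : bool -> seq T) W k1 k :
  k1 <= k -> hmorph h (take k W) = hmorph h (take k1 W) ++ hmorph h (drop k1 (take k W)).
Proof. by move=> H; rewrite (hmorph_split _ (take k W) k1) take_takel. Qed.

Lemma nonsync_side (T : eqType) (h : bool -> seq T) W0 A f B k c :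
  hmorph h W0 = A ++ f ++ B -> cutp h W0 k = size A + c -> c <= size f ->
  ~ synchronizing [:: h false; h true] f ->
  exists V P S, hmorph h V = P ++ f ++ S /\
   ((forall k' l a, a <= c -> cutp h W0 k' = size A + a -> cutp h V l = size P + a -> False) \/
    (forall k' l a, c <= a <= size f -> cutp h W0 k' = size A + a -> cutp h V l = size P + a -> False)).
Proof.
move=> EW Hc Hcf NS.
set X := [:: h false; h true].
have [p [s [Hin Hnot]]] : exists p s, in_star X (p ++ f ++ s) /\
    ~ (in_star X (p ++ take c f) /\ in_star X (drop c f ++ s)).
  case: (pselect (exists p s, in_star X (p ++ f ++ s) /\
    ~ (in_star X (p ++ take c f) /\ in_star X (drop c f ++ s)))) => // H.
  exfalso; apply: NS; exists (take c f), (drop c f); split; first by rewrite cat_take_drop.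
  move=> p s Hps.
  case: (pselect (in_star X (p ++ take c f) /\ in_star X (drop c f ++ s))) => // H2.
  by exfalso; apply: H; exists p, s.
have [V EV] := in_star_inv Hin.
exists V, p, s; split => //.
case: (pselect (exists k1 l1 a1, [/\ a1 <= c, cutp h W0 k1 = size A + a1 & cutp h V l1 = size p + a1]))
  => [[k1 [l1 [a1 [Ha1 E1 F1]]]]|N1]; last first.
  by left => k' l a Ha E F; apply: N1; exists k', l, a.
case: (pselect (exists k2 l2 a2, [/\ c <= a2 <= size f, cutp h W0 k2 = size A + a2 & cutp h V l2 = size p + a2]))
  => [[k2 [l2 [a2 [Ha2 E2 F2]]]]|N2]; last first.
  by right => k' l a Ha E F; apply: N2; exists k', l, a.
exfalso; apply: Hnot; split.
- have HV1 : hmorph h (take l1 V) = p ++ take a1 f.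
    by apply: (hmorph_take_eq EV F1); lia.
  have [M HM] : exists M, take c f = take a1 f ++ hmorph h M.
    case: (leqP k1 k) => Hk.
      exists (drop k1 (take k W0)).
      apply: (@catsK _ A); rewrite catA -(hmorph_take_eq EW Hc Hcf).
      rewrite -(hmorph_take_eq EW E1) ?(hmorph_mid _ _ Hk) //; lia.
    have := cutp_mono h W0 (ltnW Hk); rewrite Hc E1 => H.
    have -> : a1 = c by lia.
    by exists [::]; rewrite cats0.
  by rewrite HM catA -HV1 -hmorph_cat; apply: in_star_hmorph.
- have HV2 : hmorph h (drop l2 V) = drop a2 f ++ s.
    by apply: (hmorph_drop_eq EV F2); lia.
  have [M HM] : exists M, drop c f = hmorph h M ++ drop a2 f.
    case: (leqP k k2) => Hk.
      exists (drop k (take k2 W0)).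
      have E3 : take a2 f = take c f ++ hmorph h (drop k (take k2 W0)).
        apply: (@catsK _ A); rewrite catA -(hmorph_take_eq EW Hc Hcf).
        rewrite -(hmorph_take_eq EW E2) ?(hmorph_mid _ _ Hk) //; lia.
      apply: (@catsK _ (take c f)); rewrite cat_take_drop catA -E3 cat_take_drop //.
    have := cutp_mono h W0 (ltnW Hk); rewrite Hc E2 => H.
    have -> : a2 = c by lia.
    by exists [::].
  by rewrite HM -catA -HV2 -hmorph_cat; apply: in_star_hmorph.
Qed.


Lemma main_power (Gamma : finType) (hh : bool -> seq Gamma) (w : nat -> bool) :
  injective (hmorph hh) ->
  (exists f : nat -> seq Gamma,
     (forall i, factor_of_image hh w (f i)) /\
     (forall i, ~ synchronizing [:: hh false; hh true] (f i)) /\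
     (forall M : nat, exists N : nat, forall i, (N <= i)%N -> (M <= size (f i))%N)) ->
  forall K, exists v m, v != [::] /\ infix (flatten (nseq K v)) (pref w m).
Proof.
move=> inj [f [Hfac [Hns Hlen]]] K.
have [hne _] := inj_ne inj.
have L0 := Lh_pos hne.
set L := Lh hh in L0.
set N := K.+1 * L * L + 3 * L.
have N0 : 0 < N by rewrite /N; lia.
have [i0 Hi0] := Hlen (2 * N + 2 * L).
have Hf := Hi0 i0 (leqnn _).
set F := f i0 in Hf.
have [m Hm] := Hfac i0.
case/infixP: Hm => A [B EW].
set W0 := pref w m in EW.
have cW : cutp hh W0 (size W0) = size A + size F + size B.
  by rewrite cutp_over // EW !size_cat addnA.
have [k [Pk Mk]] : exists k, size A + N <= cutp hh W0 k /\
    forall k', size A + N <= cutp hh W0 k' -> k <= k'.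
  by apply: (@ex_min (fun k => size A + N <= cutp hh W0 k) (size W0)); rewrite cW; lia.
have kup : cutp hh W0 k < size A + N + L.
  case: k Pk Mk => [|k] Pk Mk; first by move: Pk; rewrite cutp0; lia.
  have : cutp hh W0 k < size A + N.
    by rewrite ltnNge; apply/negP => /Mk; lia.
  have := cutpS hh W0 k; rewrite -/L; lia.
set c := cutp hh W0 k - size A.
have Hc : cutp hh W0 k = size A + c by rewrite /c; lia.
have Hcf : c <= size F by rewrite /c; lia.
have [V [P [S [EV [Dl|Dr]]]]] := nonsync_side EW Hc Hcf (Hns i0).
- have [v [vne vinf]] : exists v : seq bool, v != [::] /\ infix (flatten (nseq K v)) W0.
    apply: (@core _ hh W0 V A (drop c F ++ B) P (drop c F ++ S) (take c F) K inj).
    + by rewrite EW [take c F ++ _]catA cat_take_drop.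
    + by rewrite EV [take c F ++ _]catA cat_take_drop.
    + by move=> k' l a; rewrite size_takel //; apply: Dl.
    + by rewrite size_takel // -/L -/N; lia.
  by exists v, m.
- have [v [vne vinf]] : exists v : seq bool, v != [::] /\ infix (flatten (nseq K v)) W0.
    apply: (@core _ hh W0 V (A ++ take c F) B (P ++ take c F) S (drop c F) K inj).
    + by rewrite EW -catA [take c F ++ _]catA cat_take_drop.
    + by rewrite EV -catA [take c F ++ _]catA cat_take_drop.
    + move=> k' l a; rewrite size_drop !size_cat size_takel // => Ha E1 E2.
      by apply: (Dr k' l (c + a)); [rewrite leq_addr /= -leq_subRL | rewrite addnA | rewrite addnA].
    + rewrite size_drop -/L -/N leq_subRL //; apply: leq_trans Hf; lia.
  by exists v, m.
Qed.


Import Order.TTheory GRing.Theory Num.Theory.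
Local Open Scope ring_scope.

Lemma sup_pinfty (S : set (\bar Rdefinitions.R)) :
  (forall M : nat, exists2 x, S x & ((M%:R : Rdefinitions.R)%:E <= x)%E) -> ereal_sup S = +oo%E.
Proof.
move=> H.
case E: (ereal_sup S) => [r| |] //.
- have [M HM] : exists M : nat, r < M%:R.
    exists (Num.trunc `|r|).+1.
    apply: (le_lt_trans (ler_norm r)).
    by rewrite truncnS_gt.
  have [x Sx Mx] := H M.
  have := ereal_sup_ubound Sx; rewrite E => xr.
  have := le_trans Mx xr; rewrite lee_fin => Mr.
  by have := lt_le_trans HM Mr; rewrite ltxx.
- have [x Sx Mx] := H 0%N.
  have := ereal_sup_ubound Sx; rewrite E => xr.
  have := le_trans Mx xr. by [].
Qed.

Lemma ACE_pinfty (T : eqType) (F : seq T -> Prop) :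
  (forall N M : nat, exists x, F x /\ (N <= size x)%N /\ ((M%:R : Rdefinitions.R)%:E <= Exp x)%E) ->
  ACE F = +oo%E.
Proof.
move=> H; rewrite /ACE limn_esup_lim.
set u := (fun n => _).
have -> : esups u = (fun=> +oo%E).
  apply/funext => n /=.
  apply: sup_pinfty => M.
  have [x [Fx [Nx Mx]]] := H n M.
  exists (u (size x)); first by exists (size x).
  apply: (le_trans Mx).
  apply: ereal_sup_ubound.
  by exists x.
exact: lim_cst.
Qed.


Lemma size_flatten_nseq (T : Type) K (v : seq T) : size (flatten (nseq K v)) = (K * size v)%N.
Proof. by elim: K => //= K IH; rewrite size_cat IH mulSn. Qed.

Lemma fracpow_pow (T : Type) (v : seq T) K : (0 < size v)%N ->
  flatten (nseq K v) = fracpow v (K * size v).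
Proof.
move=> sv; rewrite /fracpow.
have Kn : (K <= K * size v)%N by rewrite leq_pmulr.
rewrite -(subnKC Kn) nseqD flatten_cat take_size_cat // size_flatten_nseq.
by rewrite subnKC.
Qed.

Lemma Exp_pow (T : eqType) (v : seq T) K : v != [::] ->
  ((K%:R : Rdefinitions.R)%:E <= Exp (flatten (nseq K v)))%E.
Proof.
move=> vne.
have sv : (0 < size v)%N by rewrite lt0n size_eq0.
apply: ereal_sup_ubound; exists (K * size v)%N, v; split => //.
  exact: fracpow_pow.
rewrite natrM mulfK //.
by rewrite pnatr_eq0 -lt0n.
Qed.

Lemma hmorph_pow (T : Type) (hh : bool -> seq T) K v :
  hmorph hh (flatten (nseq K v)) = flatten (nseq K (hmorph hh v)).
Proof. by elim: K => //= K IH; rewrite hmorph_cat IH. Qed.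

Lemma infix_hmorph (T : eqType) (hh : bool -> seq T) u W :
  infix u W -> infix (hmorph hh u) (hmorph hh W).
Proof.
case/infixP => s [s' ->]; apply/infixP; exists (hmorph hh s), (hmorph hh s').
by rewrite !hmorph_cat.
Qed.

Theorem lemma29 (Gamma : finType) (hh : bool -> seq Gamma) (w : nat -> bool) :
  injective (hmorph hh) ->
  (exists f : nat -> seq Gamma,
     (forall i, factor_of_image hh w (f i)) /\
     (forall i, ~ synchronizing [:: hh false; hh true] (f i)) /\
     (forall M : nat, exists N : nat, forall i, (N <= i)%N -> (M <= size (f i))%N)) ->
  ACE (factor_of_image hh w) = +oo%E /\ ACE (factor_of w) = +oo%E.
Proof.
move=> inj Hf.
have Pw := main_power inj Hf.
have [hne _] := inj_ne inj.
have hv : forall v : seq bool, v != [::] -> hmorph hh v != [::].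
  case=> [|b v] // _; rewrite hmorph_cons -size_eq0 size_cat -lt0n.
  by apply: ltn_addr; rewrite lt0n size_eq0.
have KM : forall N M : nat, ((M%:R : Rdefinitions.R)%:E <= ((N + M)%N%:R)%:E)%E.
  by move=> N M; rewrite lee_fin ler_nat leq_addl.
split; apply: ACE_pinfty => N M.
- have [v [m [vne vinf]]] := Pw (N + M)%N.
  exists (flatten (nseq (N + M) (hmorph hh v))); split; [|split].
  + by exists m; rewrite -hmorph_pow; apply: infix_hmorph.
  + rewrite size_flatten_nseq; apply: (leq_trans (leq_addr M N)).
    by rewrite leq_pmulr // lt0n size_eq0 hv.
  + exact: (le_trans (KM N M) (Exp_pow _ (hv _ vne))).
- have [v [m [vne vinf]]] := Pw (N + M)%N.
  exists (flatten (nseq (N + M) v)); split; [|split].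
  + by exists m.
  + rewrite size_flatten_nseq; apply: (leq_trans (leq_addr M N)).
    by rewrite leq_pmulr // lt0n size_eq0.
  + exact: (le_trans (KM N M) (Exp_pow _ vne)).
Qed.
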